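(* Let $G_{12}$ be the graph with vertex set $\{1,\dots,12\}$ in which two distinct vertices are adjacent if and only if they both belong to one of the sets $\{1,4,7\}$, $\{2,4,5,6\}$, $\{2,4,6,7\}$, $\{2,4,6,9\}$, $\{2,4,9,12\}$, $\{2,5,8\}$, $\{2,6,7,11\}$, $\{2,11,12\}$, $\{3,6,9\}$, $\{4,5,6,10\}$, $\{4,10,12\}$, $\{6,10,11\}$, $\{10,11,12\}$. Then $G_{12}$ is not $\cup$-triangle, i.e., neither $G_{12}$ nor its complement is a triangle graph.
   Context: A graph $G$ is triangle if for every maximal stable set $S$ of $G$ and every edge $uv$ of $G$ with $u,v\notin S$, there is $s\in S$ adjacent to both $u$ and $v$. A graph is $\cup$-triangle if it or its complement is triangle. *)

(* Defs.v *)
From mathcomp Require Import all_boot.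
Set Implicit Arguments. Unset Strict Implicit. Unset Printing Implicit Defensive.

Definition simple_graph (T : finType) (e : rel T) : Prop :=
  irreflexive e /\ symmetric e.

Definition stable (T : finType) (e : rel T) (S : {set T}) : Prop :=
  forall x y, x \in S -> y \in S -> ~~ e x y.

Definition maximal_stable (T : finType) (e : rel T) (S : {set T}) : Prop :=
  stable e S /\ forall S' : {set T}, stable e S' -> S \subset S' -> S' = S.

Definition triangle_graph (T : finType) (e : rel T) : Prop :=
  forall S : {set T}, maximal_stable e S ->
  forall u v, e u v -> u \notin S -> v \notin S ->
  exists2 s, s \in S & e s u && e s v.

Definition compl_graph (T : finType) (e : rel T) : rel T :=
  fun x y => (x != y) && ~~ e x y.

Definition cup_triangle (T : finType) (e : rel T) : Prop :=
  triangle_graph e \/ triangle_graph (compl_graph e).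

(* The graph G_12 on vertices {1..12}; vertex k is represented by the
   ordinal k-1 : 'I_12 (we compare with (val x).+1). *)
Definition G12_cliques : seq (seq nat) :=
  [:: [:: 1; 4; 7]; [:: 2; 4; 5; 6]; [:: 2; 4; 6; 7]; [:: 2; 4; 6; 9];
      [:: 2; 4; 9; 12]; [:: 2; 5; 8]; [:: 2; 6; 7; 11]; [:: 2; 11; 12];
      [:: 3; 6; 9]; [:: 4; 5; 6; 10]; [:: 4; 10; 12]; [:: 6; 10; 11];
      [:: 10; 11; 12]].

Definition G12 : rel 'I_12 :=
  fun x y => (x != y) &&
    has (fun c => ((val x).+1 \in c) && ((val y).+1 \in c)) G12_cliques.

(* Main.v *)
Require Import Defs.
From mathcomp Require Import all_boot.

Definition adjn (a b : nat) := (a != b) && has (fun c => (a.+1 \in c) && (b.+1 \in c)) G12_cliques.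
Lemma G12E x y : G12 x y = adjn (val x) (val y). Proof. by []. Qed.
Lemma cG12E x y : compl_graph G12 x y = (val x != val y) && ~~ adjn (val x) (val y).
Proof. by []. Qed.

Lemma max_stab (r : nat -> nat -> bool) (e : rel 'I_12) (L : seq nat) :
  (forall x y, e x y = r (val x) (val y)) ->
  all (fun x => all (fun y => ~~ r x y) L) L ->
  all (fun x => (x \in L) || has (fun s => (s \in L) && r x s) (iota 0 12)) (iota 0 12) ->
  maximal_stable e [set x : 'I_12 | val x \in L].
Proof.
move=> eE H1 H2; split.
  move=> x y; rewrite !inE eE => xS yS.
  by move/allP/(_ _ xS)/allP/(_ _ yS): H1.
move=> S' st sub; apply/eqP; rewrite eqEsubset andbC sub /=.
apply/subsetP => x xS'; rewrite inE; apply/negPn/negP => xn.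
have xi : val x \in iota 0 12 by rewrite mem_iota /=.
move/allP/(_ _ xi): H2; rewrite (negbTE xn) orFb.
case/hasP => s si /andP[sL rxs].
have sl : s < 12 by move: si; rewrite mem_iota.
have sS : Ordinal sl \in [set x : 'I_12 | val x \in L] by rewrite inE.
by have := st x (Ordinal sl) xS' (subsetP sub _ sS); rewrite eE rxs.
Qed.

Theorem proposition42 : ~ cup_triangle G12.
Proof.
case.
  move=> H.
  have M := @max_stab adjn G12 [:: 4; 6; 8] G12E (erefl true) (erefl true).
  have [s] := H _ M (@Ordinal 12 9 isT) (@Ordinal 12 10 isT) isT ltac:(by rewrite inE) ltac:(by rewrite inE).
  rewrite inE !G12E => sS.
  have F : all (fun s => (s \in [:: 4; 6; 8]) ==> ~~ (adjn s 9 && adjn s 10)) (iota 0 12) by [].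
  have si : val s \in iota 0 12 by rewrite mem_iota /=.
  by move/allP/(_ _ si): F; rewrite sS /=  => /negP.
move=> H.
have M := @max_stab (fun a b => (a != b) && ~~ adjn a b) (compl_graph G12) [:: 1; 10; 11] cG12E (erefl true) (erefl true).
have [s] := H _ M (@Ordinal 12 6 isT) (@Ordinal 12 8 isT) isT ltac:(by rewrite inE) ltac:(by rewrite inE).
rewrite inE !cG12E => sS.
have F : all (fun s => (s \in [:: 1; 10; 11]) ==> ~~ (((s != 6) && ~~ adjn s 6) && ((s != 8) && ~~ adjn s 8))) (iota 0 12) by [].
have si : val s \in iota 0 12 by rewrite mem_iota /=.
by move/allP/(_ _ si): F; rewrite sS /=  => /negP.
Qed.
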